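(* For the empty configuration (no points, lines or curves) there exists an admissible set $\Sigma\subset\mathbb R^2$ such that no two lines, each passing through two distinct points of $\Sigma$, are perpendicular. In particular, a pair of perpendicular lines cannot be constructed using only a straightedge.
   Context: A configuration is a finite collection of points $a_i\in\mathbb R^2$, lines $\ell_i\subset\mathbb R^2$ and curves $\gamma_i\subset\mathbb R^2$. Given a configuration $\{a_i,\ell_i,\gamma_i\}$, call a set $\Sigma\subset\mathbb R^2$ admissible if: (1) $\Sigma$ is dense in $\mathbb R^2$; (2) every $a_i$ lies in $\Sigma$; (3) for any $b_1,b_2,b_3,b_4\in\Sigma$ with $b_1\neq b_2$, $b_3\ne b_4$, if the lines $b_1b_2$ and $b_3b_4$ are distinct and not parallel, then their intersection point lies in $\Sigma$; (4) for any distinct $b_1,b_2\in\Sigma$, every isolated intersection point of the line $b_1b_2$ with any of the lines $\ell_i$ or curves $\gamma_j$ lies in $\Sigma$. For the empty configuration, conditions (2) and (4) are vacuous. *)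

(* Defs.v *)
From Stdlib Require Import Reals.
Open Scope R_scope.

Definition point := (R * R)%type.

Definition on_line (b1 b2 x : point) : Prop :=
  (fst x - fst b1) * (snd b2 - snd b1) - (snd x - snd b1) * (fst b2 - fst b1) = 0.

Definition same_line (b1 b2 b3 b4 : point) : Prop :=
  forall x, on_line b1 b2 x <-> on_line b3 b4 x.

Definition parallel (b1 b2 b3 b4 : point) : Prop :=
  (fst b2 - fst b1) * (snd b4 - snd b3) - (snd b2 - snd b1) * (fst b4 - fst b3) = 0.

Definition perpendicular (b1 b2 b3 b4 : point) : Prop :=
  (fst b2 - fst b1) * (fst b4 - fst b3) + (snd b2 - snd b1) * (snd b4 - snd b3) = 0.

Definition dense (S : point -> Prop) : Prop :=
  forall (p : point) (eps : R), 0 < eps ->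
    exists q, S q /\ (fst q - fst p) ^ 2 + (snd q - snd p) ^ 2 < eps ^ 2.

(* admissible set for the empty configuration: conditions (1) and (3);
   (2) and (4) are vacuous. *)
Definition admissible_empty (S : point -> Prop) : Prop :=
  dense S /\
  (forall b1 b2 b3 b4 : point,
     S b1 -> S b2 -> S b3 -> S b4 -> b1 <> b2 -> b3 <> b4 ->
     ~ same_line b1 b2 b3 b4 -> ~ parallel b1 b2 b3 b4 ->
     forall x, on_line b1 b2 x -> on_line b3 b4 x -> S x).

(* Main.v *)
Require Import Defs.
From Stdlib Require Import Reals.
From Stdlib Require Import QArith Qreals Znumtheory Lia Lra Psatz.
Open Scope R_scope.

Lemma noZsq (p : Z) (Hp : prime p) : forall (N : nat) (d n : Z),
  (0 < d)%Z -> (Z.to_nat d <= N)%nat -> (n * n <> p * (d * d))%Z.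
Proof.
  pose proof (prime_ge_2 p Hp) as Hp2.
  induction N; intros d n Hd HN Heq; [lia|].
  assert (Hpn : (p | n)).
  { destruct (prime_mult p Hp n n) as [H|H]; auto.
    exists (d*d)%Z. rewrite Heq. ring. }
  destruct Hpn as [k Hk]; subst n.
  assert (H2 : (p * (k * k) = d * d)%Z).
  { apply (Z.mul_cancel_l _ _ p); [lia|].
    rewrite <- Heq. ring. }
  assert (Hpd : (p | d)).
  { destruct (prime_mult p Hp d d) as [H|H]; auto.
    exists (k*k)%Z. rewrite <- H2. ring. }
  destruct Hpd as [e He]; subst d.
  assert (H3 : (k * k = p * (e * e))%Z).
  { apply (Z.mul_cancel_l _ _ p); [lia|].
    rewrite H2. ring. }
  assert (0 < e)%Z by nia.
  assert (e < e * p)%Z by nia.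
  apply (IHN e k); [lia | lia | exact H3].
Qed.

Definition rat (r : R) : Prop := exists q : Q, r = Q2R q.

Lemma rat_sq (k : Z) (Hk : prime k) r : rat r -> r * r <> IZR k.
Proof.
  intros [[n d] ->] H. unfold Q2R in H; simpl in H.
  assert (Hd : IZR (Z.pos d) <> 0) by (apply not_0_IZR; lia).
  assert (H' : IZR n * IZR n = IZR k * (IZR (Z.pos d) * IZR (Z.pos d))).
  { rewrite <- H. field. auto. }
  rewrite <- !mult_IZR in H'. apply eq_IZR in H'.
  eapply (noZsq k Hk (Z.to_nat (Z.pos d)) (Z.pos d) n); eauto; lia.
Qed.

Lemma rat_plus a b : rat a -> rat b -> rat (a + b).
Proof. intros [x ->] [y ->]. exists (x + y)%Q. now rewrite Q2R_plus. Qed.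
Lemma rat_minus a b : rat a -> rat b -> rat (a - b).
Proof. intros [x ->] [y ->]. exists (x - y)%Q. now rewrite Q2R_minus. Qed.
Lemma rat_mult a b : rat a -> rat b -> rat (a * b).
Proof. intros [x ->] [y ->]. exists (x * y)%Q. now rewrite Q2R_mult. Qed.
Lemma rat_div a b : rat a -> rat b -> b <> 0 -> rat (a / b).
Proof.
  intros [x ->] [y ->] Hy. exists (x / y)%Q. rewrite Q2R_div; auto.
  intro E. apply Hy. rewrite (Qeq_eqR _ _ E). unfold Q2R; simpl. field.
Qed.
Lemma rat_opp a : rat a -> rat (- a).
Proof. intros [x ->]. exists (- x)%Q. now rewrite Q2R_opp. Qed.

Ltac ratt := repeat (assumption || apply rat_plus || apply rat_minus || apply rat_mult || apply rat_opp).

Definition s := sqrt 2.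
Lemma ss : s * s = 2.
Proof. unfold s. apply sqrt_sqrt. lra. Qed.

Definition pre (z : point) : point := (fst z - s * snd z, snd z).
Definition S (z : point) : Prop := rat (fst (pre z)) /\ rat (snd z).

Lemma rat_approx r d : 0 < d -> exists q : Q, Rabs (Q2R q - r) < d.
Proof.
  intros Hd.
  destruct (archimed (/ d)) as [A1 A2].
  set (n := up (/ d)) in *.
  assert (Hn : (0 < n)%Z).
  { apply lt_IZR. assert (0 < / d) by (apply Rinv_0_lt_compat; lra). lra. }
  assert (HnR : 0 < IZR n) by (apply IZR_lt; lia).
  destruct (archimed (r * IZR n)) as [B1 B2].
  exists (Qmake (up (r * IZR n)) (Z.to_pos n)).
  unfold Q2R; simpl. rewrite Z2Pos.id by lia.
  set (m := IZR (up (r * IZR n))) in *.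
  assert (E : m * / IZR n - r = (m - r * IZR n) / IZR n) by (field; lra).
  rewrite E. rewrite Rabs_right.
  2:{ apply Rle_ge. unfold Rdiv. apply Rmult_le_pos; [lra|]. left; apply Rinv_0_lt_compat; lra. }
  apply (Rmult_lt_reg_r (IZR n)); auto.
  replace ((m - r * IZR n) / IZR n * IZR n) with (m - r * IZR n) by (field; lra).
  apply (Rmult_lt_compat_l d) in A1; auto.
  rewrite Rinv_r in A1 by lra. lra.
Qed.

Lemma cramer (P1 P2 P3 P4 X : point) :
  rat (fst P1) -> rat (snd P1) -> rat (fst P2) -> rat (snd P2) ->
  rat (fst P3) -> rat (snd P3) -> rat (fst P4) -> rat (snd P4) ->
  on_line P1 P2 X -> on_line P3 P4 X -> ~ parallel P1 P2 P3 P4 ->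
  rat (fst X) /\ rat (snd X).
Proof.
  destruct P1 as [p1 q1], P2 as [p2 q2], P3 as [p3 q3], P4 as [p4 q4], X as [x y].
  unfold on_line, parallel; simpl. intros. 
  set (a1 := q2 - q1). set (b1 := -(p2 - p1)). set (c1 := p1 * (q2 - q1) - q1 * (p2 - p1)).
  set (a2 := q4 - q3). set (b2 := -(p4 - p3)). set (c2 := p3 * (q4 - q3) - q3 * (p4 - p3)).
  set (D := (p2 - p1) * (q4 - q3) - (q2 - q1) * (p4 - p3)) in *.
  assert (Ex : x * D - (c1 * b2 - c2 * b1) =
    b2 * ((x - p1) * (q2 - q1) - (y - q1) * (p2 - p1))
    - b1 * ((x - p3) * (q4 - q3) - (y - q3) * (p4 - p3))) by (unfold a1,b1,c1,a2,b2,c2,D; ring).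
  assert (Ey : y * D - (a1 * c2 - a2 * c1) =
    a1 * ((x - p3) * (q4 - q3) - (y - q3) * (p4 - p3))
    - a2 * ((x - p1) * (q2 - q1) - (y - q1) * (p2 - p1))) by (unfold a1,b1,c1,a2,b2,c2,D; ring).
  rewrite H7, H8 in Ex, Ey.
  assert (Hx : x = (c1 * b2 - c2 * b1) / D) by (field_simplify_eq; auto; lra).
  assert (Hy : y = (a1 * c2 - a2 * c1) / D) by (field_simplify_eq; auto; lra).
  rewrite Hx, Hy. split; apply rat_div; auto; unfold a1,b1,c1,a2,b2,c2,D; ratt.
Qed.

Lemma indep A B : rat A -> rat B -> A + s * B = 0 -> A = 0 /\ B = 0.
Proof.
  intros HA HB H.
  destruct (Req_dec B 0) as [HB0|HB0].
  - subst. lra.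
  - exfalso. assert (Hs : s = - A / B) by (field_simplify_eq; auto; lra).
    apply (rat_sq 2 prime_2 s); [rewrite Hs; apply rat_div; ratt; auto|].
    apply ss.
Qed.

Lemma final u1 u2 v1 v2 : rat u1 -> rat u2 ->
  ~ (u1 = 0 /\ u2 = 0) -> ~ (v1 = 0 /\ v2 = 0) ->
  u1 * v1 + 3 * (u2 * v2) = 0 -> u1 * v2 + u2 * v1 = 0 -> False.
Proof.
  intros Hu1 Hu2 Hu Hv E1 E2.
  destruct (Req_dec u2 0) as [Z|Z].
  - subst. assert (u1 <> 0) by tauto.
    apply Hv. split.
    + apply (Rmult_eq_reg_l u1); auto; lra.
    + apply (Rmult_eq_reg_l u1); auto; lra.
  - assert (E : v2 * (u1 * u1 - 3 * (u2 * u2)) = 0).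
    { replace (v2 * (u1 * u1 - 3 * (u2 * u2))) with
        (u1 * (u1 * v2 + u2 * v1) - u2 * (u1 * v1 + 3 * (u2 * v2))) by ring.
      rewrite E1, E2. ring. }
    apply Rmult_integral in E. destruct E as [E|E].
    + subst. apply Hv. split; [|reflexivity].
      apply (Rmult_eq_reg_l u2); auto; lra.
    + apply (rat_sq 3 prime_3 (u1 / u2)).
      * apply rat_div; auto.
      * simpl. field_simplify_eq; auto. lra.
Qed.

Theorem mainTheorem7 :
  exists S : point -> Prop,
    admissible_empty S /\
    (forall b1 b2 b3 b4 : point,
       S b1 -> S b2 -> S b3 -> S b4 -> b1 <> b2 -> b3 <> b4 ->
       ~ perpendicular b1 b2 b3 b4).
Proof.
  exists S. split; [split|].
  - intros [p1 p2] eps Heps.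
    assert (Hd : 0 < eps / 2) by lra.
    destruct (rat_approx p2 _ Hd) as [y Hy].
    destruct (rat_approx (p1 - s * Q2R y) _ Hd) as [x Hx].
    exists (Q2R x + s * Q2R y, Q2R y). split.
    + unfold S, pre; simpl. split; [|exists y; auto].
      exists x. ring.
    + simpl. apply Rabs_def2 in Hx. apply Rabs_def2 in Hy.
      set (d1 := Q2R x + s * Q2R y - p1). set (d2 := Q2R y - p2).
      assert (-(eps/2) < d1 < eps/2) by (unfold d1; lra).
      assert (-(eps/2) < d2 < eps/2) by (unfold d2; lra).
      nra.
  - intros b1 b2 b3 b4 H1 H2 H3 H4 _ _ _ Hpar x Hx1 Hx2.
    destruct H1, H2, H3, H4.
    destruct (cramer (pre b1) (pre b2) (pre b3) (pre b4) (pre x)) as [Ha Hb];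
      simpl; auto.
    + revert Hx1; unfold on_line, pre; simpl. intro E. rewrite <- E. ring.
    + revert Hx2; unfold on_line, pre; simpl. intro E. rewrite <- E. ring.
    + revert Hpar; unfold parallel, pre; simpl. intros N E. apply N. rewrite <- E. ring.
    + split; auto.
  - intros b1 b2 b3 b4 [H1a H1b] [H2a H2b] [H3a H3b] [H4a H4b] N12 N34 Hp.
    unfold perpendicular, pre in *; simpl in *.
    set (u1 := (fst b2 - s * snd b2) - (fst b1 - s * snd b1)).
    set (u2 := snd b2 - snd b1).
    set (v1 := (fst b4 - s * snd b4) - (fst b3 - s * snd b3)).
    set (v2 := snd b4 - snd b3).
    assert (E : (fst b2 - fst b1) * (fst b4 - fst b3) + (snd b2 - snd b1) * (snd b4 - snd b3)
      = (u1 * v1 + 3 * (u2 * v2)) + s * (u1 * v2 + u2 * v1) + (s * s - 2) * (u2 * v2))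
      by (unfold u1, u2, v1, v2; ring).
    rewrite ss, Hp in E.
    destruct (indep (u1 * v1 + 3 * (u2 * v2)) (u1 * v2 + u2 * v1)) as [A B].
    + unfold u1, u2, v1, v2. assert (rat 3) by (exists 3%Q; unfold Q2R; simpl; field). ratt.
    + unfold u1, u2, v1, v2; ratt.
    + lra.
    + apply (final u1 u2 v1 v2); auto.
      * unfold u1; ratt.
      * unfold u2; ratt.
      * intros [Z1 Z2]. apply N12. destruct b1, b2; unfold u1, u2 in *; simpl in *.
        f_equal; nra.
      * intros [Z1 Z2]. apply N34. destruct b3, b4; unfold v1, v2 in *; simpl in *.
        f_equal; nra.
Qed.
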